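(* Let $P_1,P_2,N>0$. If $\sigma_1^2\ge P_1\big(\frac32+\frac{P_2}{N}\big)$ and $\sigma_2^2\ge P_2\big(\frac32+\frac{P_1}{N}\big)$, then $\mathcal R_{\mathrm{Car}}(P_1,P_2,N,\sigma_1^2,\sigma_2^2)=\mathcal C_{\mathrm{MAC}}(P_1,P_2,N)$.
   Context: Notation: for $x\in[0,1]$, $\bar x=1-x$; $L(a,b)=\frac12\log(1+\frac ab)$; and $G=\bar\alpha_1P_1+\bar\alpha_2P_2+2\sqrt{\bar\alpha_1\bar\alpha_2P_1P_2}$, $H=N+\alpha_1P_1+\alpha_2P_2$. The region $\mathcal R_{\mathrm{Car}}(P_1,P_2,N,\sigma_1^2,\sigma_2^2)$ (for $\sigma_1^2,\sigma_2^2\ge0$) is the set of pairs $(R_1,R_2)$ for which there exist nonnegative $R_{1,0},R_{1,1}$ with $R_{1,0}+R_{1,1}=R_1$, nonnegative $R_{2,0},R_{2,2}$ with $R_{2,0}+R_{2,2}=R_2$, and $\alpha_1,\alpha_2,\beta_1,\beta_2,\upsilon\in[0,1]$ such that: $R_{1,0}\le L(\alpha_1\bar\beta_1P_1,\ \alpha_1\beta_1P_1+N+\sigma_2^2)$; $R_{2,0}\le L(\alpha_2\bar\beta_2P_2,\ \alpha_2\beta_2P_2+N+\sigma_1^2)$; $R_{1,1}\le L(\alpha_1\beta_1P_1,N)$; $R_{2,2}\le L(\alpha_2\beta_2P_2,N)$; $R_{1,0}+R_{2,0}\le L(\alpha_1\bar\beta_1P_1+\alpha_2\bar\beta_2P_2,N)+L(G,H)$;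 $R_{1,0}+R_{2,2}\le L(\alpha_1\bar\beta_1P_1+\alpha_2\beta_2P_2,N)+L(\upsilon G,H)$; $R_{2,0}+R_{1,1}\le L(\alpha_1\beta_1P_1+\alpha_2\bar\beta_2P_2,N)+L(\bar\upsilon G,H)$; $R_{1,1}+R_{2,2}\le L(\alpha_1\beta_1P_1+\alpha_2\beta_2P_2,N)$; $R_1+R_{2,0}\le L(\alpha_1P_1+\alpha_2\bar\beta_2P_2,N)+L(G,H)$; $R_{1,0}+R_2\le L(\alpha_1\bar\beta_1P_1+\alpha_2P_2,N)+L(G,H)$; $R_1+R_{2,2}\le L(\alpha_1P_1+\alpha_2\beta_2P_2,N)+L(\upsilon G,H)$; $R_{1,1}+R_2\le L(\alpha_1\beta_1P_1+\alpha_2P_2,N)+L(\bar\upsilon G,H)$; $R_1+R_2\le L(P_1+P_2+2\sqrt{\bar\alpha_1\bar\alpha_2P_1P_2},N)$. The no-feedback capacity region $\mathcal C_{\mathrm{MAC}}(P_1,P_2,N)$ is the set of nonnegative $(R_1,R_2)$ with $R_1\le\frac12\log(1+\frac{P_1}{N})$, $R_2\le\frac12\log(1+\frac{P_2}{N})$, $R_1+R_2\le\frac12\log(1+\frac{P_1+P_2}{N})$. *)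

(* Defs.v *)
From Stdlib Require Import Reals.
Open Scope R_scope.

Definition bar (x : R) : R := 1 - x.

(* L(a,b) = 1/2 log(1 + a/b); natural logarithm (base is a global scaling,
   and the same convention is used in both regions). *)
Definition L (a b : R) : R := / 2 * ln (1 + a / b).

Definition Gc (P1 P2 a1 a2 : R) : R :=
  bar a1 * P1 + bar a2 * P2 + 2 * sqrt (bar a1 * bar a2 * P1 * P2).

Definition Hc (P1 P2 N a1 a2 : R) : R := N + a1 * P1 + a2 * P2.

Definition in01 (x : R) : Prop := 0 <= x <= 1.

Definition R_Car (P1 P2 N s1 s2 : R) (R1 R2 : R) : Prop :=
  exists R10 R11 R20 R22 a1 a2 b1 b2 u : R,
    0 <= R10 /\ 0 <= R11 /\ R10 + R11 = R1 /\
    0 <= R20 /\ 0 <= R22 /\ R20 + R22 = R2 /\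
    in01 a1 /\ in01 a2 /\ in01 b1 /\ in01 b2 /\ in01 u /\
    let G := Gc P1 P2 a1 a2 in
    let H := Hc P1 P2 N a1 a2 in
    R10 <= L (a1 * bar b1 * P1) (a1 * b1 * P1 + N + s2) /\
    R20 <= L (a2 * bar b2 * P2) (a2 * b2 * P2 + N + s1) /\
    R11 <= L (a1 * b1 * P1) N /\
    R22 <= L (a2 * b2 * P2) N /\
    R10 + R20 <= L (a1 * bar b1 * P1 + a2 * bar b2 * P2) N + L G H /\
    R10 + R22 <= L (a1 * bar b1 * P1 + a2 * b2 * P2) N + L (u * G) H /\
    R20 + R11 <= L (a1 * b1 * P1 + a2 * bar b2 * P2) N + L (bar u * G) H /\
    R11 + R22 <= L (a1 * b1 * P1 + a2 * b2 * P2) N /\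
    R1 + R20 <= L (a1 * P1 + a2 * bar b2 * P2) N + L G H /\
    R10 + R2 <= L (a1 * bar b1 * P1 + a2 * P2) N + L G H /\
    R1 + R22 <= L (a1 * P1 + a2 * b2 * P2) N + L (u * G) H /\
    R11 + R2 <= L (a1 * b1 * P1 + a2 * P2) N + L (bar u * G) H /\
    R1 + R2 <= L (P1 + P2 + 2 * sqrt (bar a1 * bar a2 * P1 * P2)) N.

Definition C_MAC (P1 P2 N : R) (R1 R2 : R) : Prop :=
  0 <= R1 /\ 0 <= R2 /\
  R1 <= / 2 * ln (1 + P1 / N) /\
  R2 <= / 2 * ln (1 + P2 / N) /\
  R1 + R2 <= / 2 * ln (1 + (P1 + P2) / N).

(* Main.v *)
Require Import Defs.
From Stdlib Require Import Reals Lra Psatz.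
Open Scope R_scope.

Lemma ln_le' (x y : R) : 0 < x -> x <= y -> ln x <= ln y.
Proof. intros Hx [H|H]; [left; apply ln_increasing; assumption | right; subst; reflexivity]. Qed.

Lemma L0 (b : R) : L 0 b = 0.
Proof. unfold L. unfold Rdiv. rewrite Rmult_0_l, Rplus_0_r, ln_1. ring. Qed.

Lemma ratio_le (X Y Z : R) : 0 < Y -> 0 < Z -> X * Z <= Y -> X <= Y / Z.
Proof.
  intros HY HZ H.
  replace X with ((X * Z) / Z) by (field; lra).
  unfold Rdiv. apply Rmult_le_compat_r.
  - left; apply Rinv_0_lt_compat; lra.
  - exact H.
Qed.

Lemma key2 (a b c d e f : R) : 0 < b -> 0 < d -> 0 < f -> 0 <= a -> 0 <= c -> 0 <= e ->
  (b + a) * (d + c) * f <= (f + e) * b * d -> L a b + L c d <= L e f.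
Proof.
  intros Hb Hd Hf Ha Hc He H.
  unfold L. rewrite <- Rmult_plus_distr_l.
  apply Rmult_le_compat_l; [lra|].
  assert (E1 : 1 + a / b = (b + a) / b) by (field; lra).
  assert (E2 : 1 + c / d = (d + c) / d) by (field; lra).
  assert (E3 : 1 + e / f = (f + e) / f) by (field; lra).
  rewrite E1, E2, E3.
  assert (P1 : 0 < (b + a) / b) by (apply Rdiv_lt_0_compat; lra).
  assert (P2 : 0 < (d + c) / d) by (apply Rdiv_lt_0_compat; lra).
  rewrite <- ln_mult by assumption.
  apply ln_le'; [apply Rmult_lt_0_compat; assumption|].
  apply ratio_le; [nra|lra|].
  replace ((b + a) / b * ((d + c) / d) * f) with (((b + a) * (d + c) * f) / (b * d)) by (field; lra).
  apply (Rmult_le_reg_r (b * d)); [nra|].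
  replace ((b + a) * (d + c) * f / (b * d) * (b * d)) with ((b + a) * (d + c) * f) by (field; lra).
  nra.
Qed.

Lemma key3 (a b c d e f g h : R) : 0 < b -> 0 < d -> 0 < f -> 0 < h ->
  0 <= a -> 0 <= c -> 0 <= e -> 0 <= g ->
  (b + a) * (d + c) * (f + e) * h <= (h + g) * b * d * f -> L a b + L c d + L e f <= L g h.
Proof.
  intros Hb Hd Hf Hh Ha Hc He Hg H.
  unfold L. rewrite <- !Rmult_plus_distr_l.
  apply Rmult_le_compat_l; [lra|].
  assert (E1 : 1 + a / b = (b + a) / b) by (field; lra).
  assert (E2 : 1 + c / d = (d + c) / d) by (field; lra).
  assert (E3 : 1 + e / f = (f + e) / f) by (field; lra).
  assert (E4 : 1 + g / h = (h + g) / h) by (field; lra).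
  rewrite E1, E2, E3, E4.
  assert (P1 : 0 < (b + a) / b) by (apply Rdiv_lt_0_compat; lra).
  assert (P2 : 0 < (d + c) / d) by (apply Rdiv_lt_0_compat; lra).
  assert (P3 : 0 < (f + e) / f) by (apply Rdiv_lt_0_compat; lra).
  rewrite <- ln_mult by assumption. rewrite <- ln_mult. 2:{ apply Rmult_lt_0_compat; assumption. } 2: assumption. idtac.
  apply ln_le'; [apply Rmult_lt_0_compat; [apply Rmult_lt_0_compat|]; assumption|].
  apply ratio_le; [nra|lra|].
  replace ((b + a) / b * ((d + c) / d) * ((f + e) / f) * h) with
    (((b + a) * (d + c) * (f + e) * h) / (b * d * f)) by (field; lra).
  assert (0 < b * d * f) by (repeat apply Rmult_lt_0_compat; assumption).
  apply (Rmult_le_reg_r (b * d * f)); [assumption|].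
  replace ((b + a) * (d + c) * (f + e) * h / (b * d * f) * (b * d * f))
    with ((b + a) * (d + c) * (f + e) * h) by (field; lra).
  nra.
Qed.

Lemma poly (N P1 P2 s1 s2 x1 x2 : R) : 0 < N -> 0 <= x1 <= P1 -> 0 <= x2 <= P2 ->
  s1 >= P1 -> s2 >= P2 ->
  (N + P1 + s2) * (N + P2 + s1) * (N + x1 + x2) <= (N + P1 + P2) * (N + x1 + s2) * (N + x2 + s1).
Proof.
  intros HN H1 H2 Hs1 Hs2.
  set (d1 := P1 - x1). set (d2 := P2 - x2).
  set (A := N + x1 + s2). set (B := N + x2 + s1). set (T := N + x1 + x2).
  assert (E : (N + P1 + P2) * (N + x1 + s2) * (N + x2 + s1)
              - (N + P1 + s2) * (N + P2 + s1) * (N + x1 + x2)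
              = d1 * (B * (s2 - x2) - T * d2 / 2) + d2 * (A * (s1 - x1) - T * d1 / 2)).
  { unfold d1, d2, A, B, T. field. }
  assert (B1 : 0 <= B * (s2 - x2) - T * d2 / 2).
  { assert (T <= B) by (unfold T, B; lra).
    assert (d2 / 2 <= s2 - x2) by (unfold d2; lra).
    assert (0 <= T) by (unfold T; lra).
    assert (0 <= d2 / 2) by (unfold d2; lra).
    nra. }
  assert (B2 : 0 <= A * (s1 - x1) - T * d1 / 2).
  { assert (T <= A) by (unfold T, A; lra).
    assert (d1 / 2 <= s1 - x1) by (unfold d1; lra).
    assert (0 <= T) by (unfold T; lra).
    assert (0 <= d1 / 2) by (unfold d1; lra).
    nra. }
  assert (0 <= d1) by (unfold d1; lra).
  assert (0 <= d2) by (unfold d2; lra).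
  assert (F : 0 <= d1 * (B * (s2 - x2) - T * d2 / 2) + d2 * (A * (s1 - x1) - T * d1 / 2))
    by (apply Rplus_le_le_0_compat; apply Rmult_le_pos; assumption).
  rewrite <- E in F. unfold A, B, T in *. lra.
Qed.

Lemma two (N s A x P : R) : 0 < N -> 0 <= x <= A -> A <= P -> 0 <= s ->
  (x + N + s + (A - x)) * (N + x) * N <= (N + P) * (x + N + s) * N.
Proof.
  intros HN Hx HA Hs.
  assert (H : (N + s + A) * (N + x) <= (N + P) * (N + x + s)).
  { assert (H1 : 0 <= (P - A) * (N + x)) by (apply Rmult_le_pos; lra).
    assert (H2 : 0 <= s * (P - x)) by (apply Rmult_le_pos; lra).
    nra. }
  replace ((x + N + s + (A - x)) * (N + x) * N) with ((N + s + A) * (N + x) * N) by ring.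
  replace ((N + P) * (x + N + s) * N) with ((N + P) * (N + x + s) * N) by ring.
  apply Rmult_le_compat_r; lra.
Qed.

Theorem mainTheorem13 (P1 P2 N s1 s2 : R) :
  0 < P1 -> 0 < P2 -> 0 < N ->
  0 <= s1 -> 0 <= s2 ->
  s1 >= P1 * (3 / 2 + P2 / N) ->
  s2 >= P2 * (3 / 2 + P1 / N) ->
  forall R1 R2 : R, R_Car P1 P2 N s1 s2 R1 R2 <-> C_MAC P1 P2 N R1 R2.
Proof.
  intros HP1 HP2 HN Hs1 Hs2 Hc1 Hc2 R1 R2.
  assert (Q1 : 0 < P2 / N) by (apply Rdiv_lt_0_compat; lra).
  assert (Q2 : 0 < P1 / N) by (apply Rdiv_lt_0_compat; lra).
  assert (S1 : s1 >= P1) by nra.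
  assert (S2 : s2 >= P2) by nra.
  split.
  - intros H. cbv zeta in H.
    destruct H as (R10 & R11 & R20 & R22 & a1 & a2 & b1 & b2 & u & H).
    destruct H as (h10 & h11 & e1 & h20 & h22 & e2 & ia1 & ia2 & ib1 & ib2 & iu & H).
    destruct H as (c1 & c2 & c3 & c4 & c5 & c6 & c7 & c8 & c9 & c10 & c11 & c12 & c13).
    unfold in01 in *. unfold bar in *.
    assert (x1a : 0 <= a1 * b1 * P1 <= a1 * P1).
    { assert (0 <= a1 * P1) by (apply Rmult_le_pos; lra).
      replace (a1 * b1 * P1) with (b1 * (a1 * P1)) by ring. split; nra. }
    assert (x2a : 0 <= a2 * b2 * P2 <= a2 * P2).
    { assert (0 <= a2 * P2) by (apply Rmult_le_pos; lra).
      replace (a2 * b2 * P2) with (b2 * (a2 * P2)) by ring. split; nra. }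
    assert (a1P : a1 * P1 <= P1) by nra.
    assert (a2P : a2 * P2 <= P2) by nra.
    assert (E1 : a1 * (1 - b1) * P1 = a1 * P1 - a1 * b1 * P1) by ring.
    assert (E2 : a2 * (1 - b2) * P2 = a2 * P2 - a2 * b2 * P2) by ring.
    rewrite E1 in c1. rewrite E2 in c2.
    unfold C_MAC. split; [lra|]. split; [lra|].
    split; [|split].
    + change (R1 <= L P1 N).
      assert (L (a1 * P1 - a1 * b1 * P1) (a1 * b1 * P1 + N + s2) + L (a1 * b1 * P1) N <= L P1 N).
      { apply key2; try lra. apply two; lra. }
      lra.
    + change (R2 <= L P2 N).
      assert (L (a2 * P2 - a2 * b2 * P2) (a2 * b2 * P2 + N + s1) + L (a2 * b2 * P2) N <= L P2 N).
      { apply key2; try lra. apply two; lra. }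
      lra.
    + change (R1 + R2 <= L (P1 + P2) N).
      assert (L (a1 * P1 - a1 * b1 * P1) (a1 * b1 * P1 + N + s2)
            + L (a2 * P2 - a2 * b2 * P2) (a2 * b2 * P2 + N + s1)
            + L (a1 * b1 * P1 + a2 * b2 * P2) N <= L (P1 + P2) N).
      { apply key3; try lra.
        pose proof (poly N P1 P2 s1 s2 (a1 * b1 * P1) (a2 * b2 * P2) HN
                      ltac:(lra) ltac:(lra) S1 S2) as HP.
        set (x1 := a1 * b1 * P1) in *. set (x2 := a2 * b2 * P2) in *.
        set (A1 := a1 * P1) in *. set (A2 := a2 * P2) in *.
        assert (M1 : 0 <= N + s2 + A1 <= N + s2 + P1) by lra.
        assert (M2 : 0 <= N + s1 + A2 <= N + s1 + P2) by lra.
        assert (0 <= N + x1 + x2) by lra.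
        replace ((x1 + N + s2 + (A1 - x1)) * (x2 + N + s1 + (A2 - x2)) * (N + (x1 + x2)) * N)
          with ((N + s2 + A1) * (N + s1 + A2) * (N + x1 + x2) * N) by ring.
        replace ((N + (P1 + P2)) * (x1 + N + s2) * (x2 + N + s1) * N)
          with ((N + P1 + P2) * (N + x1 + s2) * (N + x2 + s1) * N) by ring.
        apply Rmult_le_compat_r; [lra|].
        apply Rle_trans with ((N + P1 + s2) * (N + P2 + s1) * (N + x1 + x2)); [|exact HP].
        apply Rmult_le_compat_r; [lra|].
        replace (N + P1 + s2) with (N + s2 + P1) by ring.
        replace (N + P2 + s1) with (N + s1 + P2) by ring.
        apply Rmult_le_compat; lra. }
      lra.
  - intros (h1 & h2 & c1 & c2 & c3).
    assert (HG : Gc P1 P2 1 1 = 0).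
    { unfold Gc, bar. replace (1 - 1) with 0 by ring.
      rewrite !Rmult_0_l, sqrt_0. ring. }
    exists 0, R1, 0, R2, 1, 1, 1, 1, 0.
    cbv zeta. rewrite HG. unfold bar. replace (1 - 1) with 0 by ring.
    rewrite ?Rmult_0_l, ?Rmult_0_r, ?Rmult_1_l, ?Rplus_0_l, ?Rplus_0_r, ?sqrt_0, ?L0.
    rewrite ?Rmult_0_l, ?Rmult_0_r, ?Rplus_0_l, ?Rplus_0_r, ?L0.
    unfold in01, L. rewrite ?Rplus_0_r.
    repeat split; lra.
Qed.
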